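(* Assume that $d_k < \sqrt{2}\,(p_k)^{1/2}$ for every integer $k\geq 1$ with $k\neq 4$. Then for every $n\geq 1$, $p_{n+2} < (p_n+1) + 2\sqrt2\,(p_n)^{1/2}$; that is, there are at least two primes greater than $p_n$ and less than $p_n + 1 + 2\sqrt{2p_n} = (\sqrt{p_n}+\sqrt2)^2 - 1$.
   Context: $p_k$ denotes the $k$th prime ($p_1=2$) and $d_k := p_{k+1}-p_k$. *)

(* Defs.v *)
From mathcomp Require Import all_boot.
From Stdlib Require Import Reals.

Set Implicit Arguments.
Unset Strict Implicit.
Unset Printing Implicit Defensive.

Lemma exists_prime_above (m : nat) : exists p, (m < p) && prime p.
Proof. by case: (prime_above m) => p H1 H2; exists p; rewrite H1 H2. Qed.

Definition next_prime (m : nat) : nat := ex_minn (exists_prime_above m).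

(* nth_prime k = p_k, with p_1 = 2 (p_0 = 1 is an unused dummy value). *)
Fixpoint nth_prime (k : nat) : nat :=
  match k with
  | 0 => 1
  | k'.+1 => next_prime (nth_prime k')
  end.

Definition prime_gap (k : nat) : nat := nth_prime k.+1 - nth_prime k.

(* Main.v *)
Require Import Defs.
From mathcomp Require Import all_boot.
From Stdlib Require Import Reals Lra Psatz Lia.

Lemma next_prime_gt m : (m < next_prime m)%N.
Proof. rewrite /next_prime; case: ex_minnP => p /andP [H _] _; exact H. Qed.

Lemma next_primeE m p : (m < p)%N -> prime p ->
  (forall q, (m < q)%N -> (q < p)%N -> ~~ prime q) -> next_prime m = p.
Proof.
move=> Hmp Pp Hq; rewrite /next_prime; case: ex_minnP => r /andP [Hr Pr] Hmin.
apply/eqP; rewrite eqn_leq Hmin ?Hmp ?Pp //=.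
case: (leqP p r) => // Hrp.
by move: (Hq r Hr Hrp); rewrite Pr.
Qed.

Lemma np_step k : nth_prime k.+1 = (nth_prime k + prime_gap k)%N.
Proof.
rewrite /prime_gap /= subnKC //; apply: ltnW; exact: next_prime_gt.
Qed.

Lemma np3 : nth_prime 3 = 5%N.
Proof.
have h1 : nth_prime 1 = 2%N.
  by rewrite /= (@next_primeE 1 2) // => q; case: q => [|[|[|]]].
have h2 : nth_prime 2 = 3%N.
  by rewrite /= -/(nth_prime 1) h1 (@next_primeE 2 3) // => q; case: q => [|[|[|[|]]]].
by rewrite /= -/(nth_prime 2) h2 (@next_primeE 3 5) // => q; case: q => [|[|[|[|[|[|]]]]]].
Qed.

Lemma np4 : nth_prime 4 = 7%N.
Proof.
by rewrite /= -/(nth_prime 3) np3 (@next_primeE 5 7) // => q;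
  case: q => [|[|[|[|[|[|[|[|]]]]]]]].
Qed.

Lemma np5 : nth_prime 5 = 11%N.
Proof.
by rewrite /= -/(nth_prime 4) np4 (@next_primeE 7 11) // => q;
  do 12! case: q => [//|q].
Qed.

Lemma np6 : nth_prime 6 = 13%N.
Proof.
by rewrite /= -/(nth_prime 5) np5 (@next_primeE 11 13) // => q;
  do 14! case: q => [//|q].
Qed.

Open Scope R_scope.

Theorem theorem2p14 :
  (forall k : nat, (1 <= k)%nat -> (k <> 4)%nat ->
     INR (prime_gap k) < sqrt 2 * sqrt (INR (nth_prime k))) ->
  forall n : nat, (1 <= n)%nat ->
    INR (nth_prime (n + 2)%nat) < (INR (nth_prime n) + 1) + 2 * sqrt 2 * sqrt (INR (nth_prime n)).
Proof.
move=> H n Hn.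
have s2 : sqrt 2 * sqrt 2 = 2 by apply: sqrt_sqrt; lra.
have s2p : 0 <= sqrt 2 by apply: sqrt_pos.
case E3: (n == 3%nat).
  move/eqP: E3 => ->; change (3+2)%nat with 5%nat; rewrite np5 np3.
  replace (INR 11) with 11 by (simpl; lra); replace (INR 5) with 5 by (simpl; lra).
  rewrite Rmult_assoc -sqrt_mult; try lra.
  have s5 : sqrt (2*5) * sqrt (2*5) = 2*5 by apply: sqrt_sqrt; lra.
  have s5p : 0 <= sqrt (2*5) by apply: sqrt_pos.
  nra.
case E4: (n == 4%nat).
  move/eqP: E4 => ->; change (4+2)%nat with 6%nat; rewrite np6 np4.
  replace (INR 13) with 13 by (simpl; lra); replace (INR 7) with 7 by (simpl; lra).
  rewrite Rmult_assoc -sqrt_mult; try lra.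
  have s5 : sqrt (2*7) * sqrt (2*7) = 2*7 by apply: sqrt_sqrt; lra.
  have s5p : 0 <= sqrt (2*7) by apply: sqrt_pos.
  nra.
have n4 : n <> 4%nat by move=> e; rewrite e in E4.
have Ha := H n Hn n4.
have Hb : INR (prime_gap n.+1) < sqrt 2 * sqrt (INR (nth_prime n.+1)).
  apply: H => //.
  by move=> [e]; rewrite e in E3.
rewrite addn2 np_step np_step in Hb * ; rewrite !plus_INR in Hb *.
set P := INR (nth_prime n) in Ha Hb *.
set a := INR (prime_gap n) in Ha Hb *.
set b := INR (prime_gap n.+1) in Hb *.
have P0 : 0 <= P by apply: pos_INR.
have a0 : 0 <= a by apply: pos_INR.
have sP : sqrt P * sqrt P = P by apply: sqrt_sqrt.
have sPp : 0 <= sqrt P by apply: sqrt_pos.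
have sQ : sqrt (P + a) * sqrt (P + a) = P + a by apply: sqrt_sqrt; lra.
have sQp : 0 <= sqrt (P + a) by apply: sqrt_pos.
set s := sqrt 2 * sqrt P in Ha.
set u := sqrt 2 * sqrt (P + a) in Hb.
have ss : s * s = 2 * P.
  rewrite /s; transitivity ((sqrt 2 * sqrt 2) * (sqrt P * sqrt P)); first ring.
  by rewrite s2 sP.
have uu : u * u = 2 * (P + a).
  rewrite /u; transitivity ((sqrt 2 * sqrt 2) * (sqrt (P + a) * sqrt (P + a))); first ring.
  by rewrite s2 sQ.
have s0 : 0 <= s by rewrite /s; nra.
have u0 : 0 <= u by rewrite /u; nra.
have key : u < 1 + 2 * s - a.
  apply: Rnot_le_lt => hw.
  have w0 : 0 <= 1 + 2 * s - a by lra.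
  have h1 : (1 + 2 * s - a) * (1 + 2 * s - a) <= u * u.
    apply: Rmult_le_compat => //.
  have h2 : 0 <= (s - a) * (3 * s - a) by apply: Rmult_le_pos; lra.
  nra.
rewrite /s in key; rewrite np_step plus_INR -/P -/a Rmult_assoc; lra.
Qed.
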